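(* Let $p$ be a prime, let $N,K,T,M,h$ be positive integers with $T\ge 1$ and $K\mid M$, and let $\beta_1,\ldots,\beta_{K+T}\in\mathbb{F}_p$ be pairwise distinct and $\alpha_1,\ldots,\alpha_N\in\mathbb{F}_p$ be pairwise distinct with $\{\alpha_1,\ldots,\alpha_N\}\cap\{\beta_1,\ldots,\beta_{K+T}\}=\emptyset$. For $k\in[K+T]$ let $L_k(x)=\prod_{\ell\in[K+T]\setminus\{k\}}\frac{x-\beta_\ell}{\beta_k-\beta_\ell}$. For each client $n\in[N]$ let $D_n,d_n$ be positive integers and let $\overline{X}_n=(\overline{X}_n^i)_{i\in[D_n]}$ with $\overline{X}_n^i\in\mathbb{F}_p^{M\times d_n}$ and $\overline{W}_n=(\overline{W}_n^i)_{i\in[D_n]}$ with $\overline{W}_n^i\in\mathbb{F}_p^{d_n\times h}$ be random variables (private data and model of client $n$); for $k\in[K]$ let $\overline{X}_{n,k}^i$ be the $k$-th block of $M/K$ consecutive rows of $\overline{X}_n^i$. Let all mask matrices $Z_{n,k}^i\in\mathbb{F}_p^{(M/K)\times d_n}$ and $V_{n,k}^i\in\mathbb{F}_p^{d_n\times h}$ ($n\in[N]$, $i\in[D_n]$, $k=K+1,\ldots,K+T$) be uniformly distributed, mutually independent, and independent of all data and models. Define $$F_n^i(x)=\sum_{k=1}^K\overline{X}_{n,k}^iL_k(x)+\sum_{k=K+1}^{K+T}Z_{n,k}^iL_k(x),\qquad G_n^i(x)=\sum_{k=1}^K\overline{W}_{n}^iL_k(x)+\sum_{k=K+1}^{K+T}V_{n,k}^iL_k(x).$$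 Fix a batch $\mathcal{B}\subseteq[M/K]$ of row indices, write $A^{(\mathcal{B})}$ for the rows of $A$ indexed by $\mathcal{B}$, and for each $n'\in[N]$ let $$\widetilde{H}_{n'}^{(\mathcal{B})}=\sum_{m=1}^N\sum_{i=1}^{D_m}F_m^{i}(\alpha_{n'})^{(\mathcal{B})}\,G_m^i(\alpha_{n'})$$ be the result uploaded by client $n'$ to the server. Then for every $n\in[N]$, $I\big(\widetilde{H}_n^{(\mathcal{B})};(\overline{X}_n,\overline{W}_n)\big)=0$, where $I$ denotes mutual information.
   Context: This is the privacy guarantee of the FedVS protocol for split vertical federated learning against a curious server: clients secret-share their quantized data and quantized polynomial-network models via Lagrange coded computing (partition parameter $K$, privacy parameter $T$) and each client uploads only its homomorphically computed coded embedding. $[N]=\{1,\ldots,N\}$. *)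

(* Defs.v *)
From mathcomp Require Import all_boot all_algebra.
From mathcomp Require Import reals exp.
Set Implicit Arguments. Unset Strict Implicit. Unset Printing Implicit Defensive.
Import GRing.Theory Num.Theory.
Local Open Scope ring_scope.

(** Finite probability space: a probability mass function P on a finite
    sample space Omega.  Random variables are functions out of Omega. *)
Definition is_distr (R : realType) (Omega : finType) (P : Omega -> R) : Prop :=
  (forall w, 0 <= P w) /\ \sum_(w : Omega) P w = 1.

Definition Pr (R : realType) (Omega : finType) (P : Omega -> R) (E : pred Omega) : R :=
  \sum_(w : Omega | E w) P w.

(** Mutual information I(X;Y) = sum_{a,b} p(a,b) log (p(a,b) / (p(a) p(b)))
    with the convention 0 log 0 = 0 (natural logarithm). *)
Definition mutual_info (R : realType) (Omega : finType) (P : Omega -> R)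
    (A B : finType) (X : Omega -> A) (Y : Omega -> B) : R :=
  \sum_(a : A) \sum_(b : B)
    (let pab := Pr P [pred w | (X w == a) && (Y w == b)] in
     let pa := Pr P [pred w | X w == a] in
     let pb := Pr P [pred w | Y w == b] in
     if pab == 0 then 0 else pab * ln (pab / (pa * pb))).

Definition lagrange_basis (F : fieldType) (n : nat) (beta : 'I_n -> F)
    (k : 'I_n) (x : F) : F :=
  \prod_(l < n | l != k) ((x - beta l) / (beta k - beta l)).

Lemma block_idx_lt (M K : nat) (k : 'I_K) (r : 'I_(M %/ K)) :
  (k * (M %/ K) + r < M)%N.
Proof.
have hr := ltn_ord r; have hk := ltn_ord k.
apply: (@leq_trans (k.+1 * (M %/ K))).
  by rewrite mulSn addnC ltn_add2r.
apply: (@leq_trans (K * (M %/ K))); first by rewrite leq_mul2r hk orbT.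
by rewrite mulnC leq_trunc_div.
Qed.

(** k-th block (0-based) of M/K consecutive rows of an M x d matrix. *)
Definition row_block (F : fieldType) (M K d : nat) (A : 'M[F]_(M, d)) (k : 'I_K)
  : 'M[F]_(M %/ K, d) :=
  rowsub (fun r : 'I_(M %/ K) => Ordinal (block_idx_lt k r)) A.

(** A^(B): the rows of A indexed by the batch B (in increasing order). *)
Definition batch_rows (F : fieldType) (m d : nat) (B : {set 'I_m}) (A : 'M[F]_(m, d))
  : 'M[F]_(#|B|, d) :=
  rowsub (fun r : 'I_#|B| => enum_val r) A.

Definition coded_data (F : fieldType) (K T M d : nat) (beta : 'I_(K + T) -> F)
    (Xb : 'M[F]_(M, d)) (Zs : 'I_T -> 'M[F]_(M %/ K, d)) (x : F) : 'M[F]_(M %/ K, d) :=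
  \sum_(k < K) lagrange_basis beta (lshift T k) x *: row_block Xb k
  + \sum_(t < T) lagrange_basis beta (rshift K t) x *: Zs t.

Definition coded_model (F : fieldType) (K T d h : nat) (beta : 'I_(K + T) -> F)
    (Wb : 'M[F]_(d, h)) (Vs : 'I_T -> 'M[F]_(d, h)) (x : F) : 'M[F]_(d, h) :=
  \sum_(k < K) lagrange_basis beta (lshift T k) x *: Wb
  + \sum_(t < T) lagrange_basis beta (rshift K t) x *: Vs t.

(* Main.v *)
Require Import Defs.
From mathcomp Require Import all_boot all_algebra.
From mathcomp Require Import reals exp.
From Stdlib Require Import FunctionalExtensionality.
Import GRing.Theory Num.Theory.
Local Open Scope ring_scope.

Lemma lag_neq0 (F : fieldType) n (beta : 'I_n -> F) k x :
  injective beta -> (forall l, x != beta l) -> lagrange_basis beta k x != 0.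
Proof.
move=> ib hx; rewrite /lagrange_basis; apply/prodf_neq0 => l lk.
rewrite mulf_neq0 ?invr_eq0 ?subr_eq0 //.
by apply/eqP => /ib E; move: lk; rewrite E eqxx.
Qed.

Lemma shift_lemma (F : fieldType) (V : lmodType F) K T (a : 'I_K -> F) (b : 'I_T -> F)
  (u u0 : 'I_K -> V) (z : 'I_T -> V) t0 : b t0 != 0 ->
  \sum_k a k *: u k + \sum_t b t *: z t =
  \sum_k a k *: u0 k + \sum_t b t *: (z t + (t == t0)%:R *: ((b t0)^-1 *: \sum_k a k *: (u k - u0 k))).
Proof.
move=> hb.
under [X in _ = _ + X]eq_bigr => t _ do rewrite scalerDr.
rewrite big_split /=.
set W := _^-1 *: _.
have -> : \sum_t b t *: ((t == t0)%:R *: W) = b t0 *: W.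
  rewrite (bigD1 t0) //= big1 ?addr0; last first.
    by move=> t ht; rewrite (negbTE ht) scale0r scaler0.
  by rewrite eqxx scale1r.
rewrite /W scalerA divff // scale1r.
under [X in _ = _ + (_ + X)]eq_bigr => k _ do rewrite scalerBr.
rewrite sumrB.
rewrite addrC [RHS]addrC -!addrA; congr (_ + _).
by rewrite addNr addr0.
Qed.
Lemma cd_shift (F : fieldType) K T M d (beta : 'I_(K + T) -> F) (x x0 : 'M[F]_(M, d))
  (z : 'I_T -> 'M[F]_(M %/ K, d)) t0 al :
  lagrange_basis beta (rshift K t0) al != 0 ->
  coded_data beta x z al = coded_data beta x0 (fun t => z t + (t == t0)%:R *:
    ((lagrange_basis beta (rshift K t0) al)^-1 *:
      \sum_k lagrange_basis beta (lshift T k) al *: (row_block x k - row_block x0 k))) al.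
Proof. exact: shift_lemma. Qed.

Lemma cm_shift (F : fieldType) K T d h (beta : 'I_(K + T) -> F) (x x0 : 'M[F]_(d, h))
  (z : 'I_T -> 'M[F]_(d, h)) t0 al :
  lagrange_basis beta (rshift K t0) al != 0 ->
  coded_model beta x z al = coded_model beta x0 (fun t => z t + (t == t0)%:R *:
    ((lagrange_basis beta (rshift K t0) al)^-1 *:
      \sum_(k < K) lagrange_basis beta (lshift T k) al *: (x - x0))) al.
Proof. exact: shift_lemma. Qed.

Lemma cd_ext (F : fieldType) K T M d (beta : 'I_(K + T) -> F) (x : 'M[F]_(M, d))
  (z z' : 'I_T -> 'M[F]_(M %/ K, d)) al :
  (forall t, z t = z' t) -> coded_data beta x z al = coded_data beta x z' al.
Proof. by move=> e; rewrite /coded_data; congr (_ + _); apply: eq_bigr => t _; rewrite e. Qed.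

Lemma cm_ext (F : fieldType) K T d h (beta : 'I_(K + T) -> F) (x : 'M[F]_(d, h))
  (z z' : 'I_T -> 'M[F]_(d, h)) al :
  (forall t, z t = z' t) -> coded_model beta x z al = coded_model beta x z' al.
Proof. by move=> e; rewrite /coded_model; congr (_ + _); apply: eq_bigr => t _; rewrite e. Qed.

Lemma cd_shift2 (F : fieldType) K T M d (beta : 'I_(K + T) -> F) (x x0 : 'M[F]_(M, d))
  (z z' : 'I_T -> 'M[F]_(M %/ K, d)) t0 al (Wm : 'M[F]_(M %/ K, d)) :
  lagrange_basis beta (rshift K t0) al != 0 ->
  Wm = (lagrange_basis beta (rshift K t0) al)^-1 *:
      \sum_k lagrange_basis beta (lshift T k) al *: (row_block x k - row_block x0 k) ->
  (forall t, z' t = z t + (t == t0)%:R *: Wm) ->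
  coded_data beta x z al = coded_data beta x0 z' al.
Proof.
move=> hb hW e; rewrite (cd_shift _ _ _ _ _ _ _ x0 _ _ _ hb).
by apply: cd_ext => t; rewrite e hW.
Qed.

Lemma cm_shift2 (F : fieldType) K T d h (beta : 'I_(K + T) -> F) (x x0 : 'M[F]_(d, h))
  (z z' : 'I_T -> 'M[F]_(d, h)) t0 al (Wm : 'M[F]_(d, h)) :
  lagrange_basis beta (rshift K t0) al != 0 ->
  Wm = (lagrange_basis beta (rshift K t0) al)^-1 *:
      \sum_(k < K) lagrange_basis beta (lshift T k) al *: (x - x0) ->
  (forall t, z' t = z t + (t == t0)%:R *: Wm) ->
  coded_model beta x z al = coded_model beta x0 z' al.
Proof.
move=> hb hW e; rewrite (cm_shift _ _ _ _ _ _ _ x0 _ _ _ hb).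
by apply: cm_ext => t; rewrite e hW.
Qed.

Section Gen.
Variables (R : realType) (Omega : finType) (P : Omega -> R).

Lemma Pr_ext (E1 E2 : pred Omega) : (forall o, E1 o = E2 o) -> Pr P E1 = Pr P E2.
Proof. by move=> h; rewrite /Pr; apply: eq_bigl. Qed.

Lemma Pr_if (E F : pred Omega) (b : bool) : (forall o, E o = b && F o) ->
  Pr P E = if b then Pr P F else 0.
Proof.
move=> h; case: b h => h; first exact: Pr_ext.
by rewrite /Pr big_pred0.
Qed.

Lemma pr_part (Z : finType) (F : Omega -> Z) (E : pred Omega) :
  Pr P E = \sum_(z : Z) Pr P [pred o | E o && (F o == z)].
Proof. by rewrite /Pr (partition_big F predT). Qed.

Lemma mi_zero (A S Y G : finType) (Dat : Omega -> A) (Msk : Omega -> S)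
  (f : A -> S -> Y) (g : A -> G) (Hh : Omega -> Y) (GG : Omega -> G) (c : R) (q : Y -> nat) :
  is_distr P -> (forall o, Hh o = f (Dat o) (Msk o)) -> (forall o, GG o = g (Dat o)) ->
  (forall dl sg, Pr P [pred o | (Dat o == dl) && (Msk o == sg)] = Pr P [pred o | Dat o == dl] * c) ->
  (forall dl y, #|[set sg | f dl sg == y]| = q y) ->
  mutual_info P Hh GG = 0.
Proof.
move=> [_ P1] HH HG Hind Hq.
have joint : forall y b, Pr P [pred o | (Hh o == y) && (GG o == b)] =
    Pr P [pred o | GG o == b] * (c *+ q y).
  move=> y b.
  rewrite (pr_part _ Dat) [in RHS](pr_part _ Dat) mulr_suml; apply: eq_bigr => dl _.
  rewrite (pr_part _ Msk).
  under eq_bigr => sg _.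
    rewrite (@Pr_if _ [pred o | (Dat o == dl) && (Msk o == sg)] ((f dl sg == y) && (g dl == b))); last first.
      move=> o; rewrite /= (HH o); move: (HG o) => ->.
      by case: (Dat o =P dl) => [->|]; case: (Msk o =P sg) => [->|]; rewrite ?andbF ?andbT.
    rewrite Hind.
  over.
  rewrite [in RHS](@Pr_if _ [pred o | Dat o == dl] (g dl == b)); last first.
    move=> o; move: (HG o) => /= ->.
    by case: (Dat o =P dl) => [->|]; rewrite ?andbF ?andbT.
  case: (g dl == b); last by rewrite big1 ?mul0r // => sg _; rewrite andbF.
  under eq_bigr do rewrite andbT.
  rewrite -big_mkcond /= (eq_bigl (fun sg => sg \in [set sg | f dl sg == y])); last by move=> sg; rewrite inE.
  rewrite sumr_const Hq.
  by rewrite mulrnAr.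
have marg : forall y, Pr P [pred o | Hh o == y] = c *+ q y.
  move=> y; rewrite (pr_part _ GG).
  under eq_bigr => b _ do rewrite joint.
  rewrite -mulr_suml.
  have -> : \sum_b Pr P [pred o | GG o == b] = 1.
    rewrite -P1; transitivity (Pr P predT); last by rewrite /Pr.
    by rewrite [RHS](pr_part _ GG); apply: eq_bigr => b' _; apply: Pr_ext.
  by rewrite mul1r.
rewrite /mutual_info; apply: big1 => y _; apply: big1 => b _ /=.
rewrite joint marg; case: eqP => // /eqP Hne.
rewrite [c *+ _ * _]mulrC divff ?ln1 ?mulr0 //.

Qed.
End Gen.
Theorem theorem3 (R : realType) (p N K T M h : nat)
  (D d : 'I_N -> nat)
  (beta : 'I_(K + T) -> 'F_p) (alpha : 'I_N -> 'F_p)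
  (Omega : finType) (P : Omega -> R)
  (X : forall (n : 'I_N) (i : 'I_(D n)), Omega -> 'M['F_p]_(M, d n))
  (W : forall (n : 'I_N) (i : 'I_(D n)), Omega -> 'M['F_p]_(d n, h))
  (Z : forall (n : 'I_N) (i : 'I_(D n)) (t : 'I_T), Omega -> 'M['F_p]_(M %/ K, d n))
  (V : forall (n : 'I_N) (i : 'I_(D n)) (t : 'I_T), Omega -> 'M['F_p]_(d n, h))
  (B : {set 'I_(M %/ K)}) :
  prime p ->
  (0 < N)%N -> (0 < K)%N -> (1 <= T)%N -> (0 < M)%N -> (0 < h)%N -> (K %| M)%N ->
  (forall n, 0 < D n)%N -> (forall n, 0 < d n)%N ->
  injective beta -> injective alpha ->
  (forall (n : 'I_N) (k : 'I_(K + T)), alpha n != beta k) ->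
  is_distr P ->
  (* the masks are uniform, mutually independent and independent of all
     data and models (jointly) *)
  (forall (x : forall (n : 'I_N) (i : 'I_(D n)), 'M['F_p]_(M, d n))
          (w : forall (n : 'I_N) (i : 'I_(D n)), 'M['F_p]_(d n, h))
          (z : forall (n : 'I_N) (i : 'I_(D n)) (t : 'I_T), 'M['F_p]_(M %/ K, d n))
          (v : forall (n : 'I_N) (i : 'I_(D n)) (t : 'I_T), 'M['F_p]_(d n, h)),
     Pr P [pred o | [forall n : 'I_N, forall i : 'I_(D n),
                       (X n i o == x n i) && (W n i o == w n i)]
                    && [forall n : 'I_N, forall i : 'I_(D n), forall t : 'I_T,
                       (Z n i t o == z n i t) && (V n i t o == v n i t)]]
     = Pr P [pred o | [forall n : 'I_N, forall i : 'I_(D n),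
                       (X n i o == x n i) && (W n i o == w n i)]]
       * \prod_(n : 'I_N) \prod_(i < D n)
           ((#|{: 'M['F_p]_(M %/ K, d n)}|%:R)^-1 * (#|{: 'M['F_p]_(d n, h)}|%:R)^-1) ^+ T) ->
  let H (n' : 'I_N) (o : Omega) : 'M['F_p]_(#|B|, h) :=
    \sum_(m < N) \sum_(i < D m)
      batch_rows B (coded_data beta (X m i o) (fun t => Z m i t o) (alpha n'))
      *m coded_model beta (W m i o) (fun t => V m i t o) (alpha n') in
  let XW (n : 'I_N) (o : Omega) : {ffun 'I_(D n) -> 'M['F_p]_(M, d n) * 'M['F_p]_(d n, h)} :=
    [ffun i => (X n i o, W n i o)] in
  forall n : 'I_N, mutual_info P (H n) (XW n) = 0.
Proof.
move=> pr N0 K0 T1 M0 h0 KM D0 d0 ib ia anb dP Hind H XW n.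
pose t0 : 'I_T := Ordinal T1.
pose La (k : 'I_K) := lagrange_basis beta (lshift T k) (alpha n).
pose Lb (t : 'I_T) := lagrange_basis beta (rshift K t) (alpha n).
have Lb0 : Lb t0 != 0 by apply: lag_neq0.
pose Dat (o : Omega) : {dffun forall m : 'I_N, {ffun 'I_(D m) -> 'M['F_p]_(M, d m) * 'M['F_p]_(d m, h)}} :=
  [ffun m => [ffun i => (X m i o, W m i o)]].
pose Msk (o : Omega) : {dffun forall m : 'I_N, {ffun 'I_(D m) -> {ffun 'I_T -> 'M['F_p]_(M %/ K, d m) * 'M['F_p]_(d m, h)}}} :=
  [ffun m => [ffun i => [ffun t => (Z m i t o, V m i t o)]]].
pose f (dl : {dffun forall m : 'I_N, {ffun 'I_(D m) -> 'M['F_p]_(M, d m) * 'M['F_p]_(d m, h)}})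
       (sg : {dffun forall m : 'I_N, {ffun 'I_(D m) -> {ffun 'I_T -> 'M['F_p]_(M %/ K, d m) * 'M['F_p]_(d m, h)}}}) :
   'M['F_p]_(#|B|, h) :=
  \sum_(m < N) \sum_(i < D m)
      batch_rows B (coded_data beta (dl m i).1 (fun t => (sg m i t).1) (alpha n))
      *m coded_model beta (dl m i).2 (fun t => (sg m i t).2) (alpha n).
pose dl0 : {dffun forall m : 'I_N, {ffun 'I_(D m) -> 'M['F_p]_(M, d m) * 'M['F_p]_(d m, h)}} :=
  [ffun m => [ffun i => (0, 0)]].
apply: (@mi_zero R Omega P _ _ _ _ Dat Msk f (fun dl => dl n) (H n) (XW n) _
          (fun y => #|[set sg | f dl0 sg == y]|) dP).
- move=> o; rewrite /H /f; apply: eq_bigr => m _; apply: eq_bigr => i _.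
  rewrite !ffunE.
  have -> : (fun t => ([ffun t0 => (Z m i t0 o, V m i t0 o)] t).1) = (fun t => Z m i t o).
    by apply: functional_extensionality => t; rewrite ffunE.
  have -> : (fun t => ([ffun t0 => (Z m i t0 o, V m i t0 o)] t).2) = (fun t => V m i t o).
    by apply: functional_extensionality => t; rewrite ffunE.
  by [].
- by move=> o; rewrite /XW ffunE.
- move=> dl sg.
  have := Hind (fun m i => (dl m i).1) (fun m i => (dl m i).2)
    (fun m i t => (sg m i t).1) (fun m i t => (sg m i t).2).
  have E1 : forall o, [forall m : 'I_N, forall i : 'I_(D m),
      (X m i o == (dl m i).1) && (W m i o == (dl m i).2)] = (Dat o == dl).
    move=> o; apply/idP/idP.
    - move=> /forallP Hm; apply/eqP/ffunP => m; apply/ffunP => i; rewrite /Dat !ffunE.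
      move: (Hm m) => /forallP /(_ i) /andP [/eqP -> /eqP ->].
      by case: (dl m i).
    - by move=> /eqP <-; apply/forallP => m; apply/forallP => i; rewrite /Dat !ffunE !eqxx.
  have E2 : forall o, [forall m : 'I_N, forall i : 'I_(D m), forall t : 'I_T,
      (Z m i t o == (sg m i t).1) && (V m i t o == (sg m i t).2)] = (Msk o == sg).
    move=> o; apply/idP/idP.
    - move=> /forallP Hm; apply/eqP/ffunP => m; apply/ffunP => i; apply/ffunP => t.
      rewrite /Msk !ffunE.
      move: (Hm m) => /forallP /(_ i) /forallP /(_ t) /andP [/eqP -> /eqP ->].
      by case: (sg m i t).
    - move=> /eqP <-; apply/forallP => m; apply/forallP => i; apply/forallP => t.
      by rewrite /Msk !ffunE !eqxx.
  move=> Hd.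
  rewrite (@Pr_ext _ _ _ [pred o | (Dat o == dl) && (Msk o == sg)] _
     (fun o => congr2 andb (esym (E1 o)) (esym (E2 o)))).
  rewrite (@Pr_ext _ _ _ [pred o | Dat o == dl] _ (fun o => esym (E1 o))).
  exact: Hd.
- move=> dl y.
  pose shZ (m : 'I_N) (i : 'I_(D m)) : 'M['F_p]_(M %/ K, d m) :=
    (lagrange_basis beta (rshift K t0) (alpha n))^-1 *:
      \sum_k lagrange_basis beta (lshift T k) (alpha n) *:
         (row_block (dl m i).1 k - row_block (dl0 m i).1 k).
  pose shV (m : 'I_N) (i : 'I_(D m)) : 'M['F_p]_(d m, h) :=
    (lagrange_basis beta (rshift K t0) (alpha n))^-1 *:
      \sum_(k < K) lagrange_basis beta (lshift T k) (alpha n) *: ((dl m i).2 - (dl0 m i).2).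
  pose phi (sg : {dffun forall m : 'I_N, {ffun 'I_(D m) -> {ffun 'I_T -> 'M['F_p]_(M %/ K, d m) * 'M['F_p]_(d m, h)}}})
    : {dffun forall m : 'I_N, {ffun 'I_(D m) -> {ffun 'I_T -> 'M['F_p]_(M %/ K, d m) * 'M['F_p]_(d m, h)}}} :=
    [ffun m => [ffun i => [ffun t => ((sg m i t).1 + (t == t0)%:R *: shZ m i,
                                      (sg m i t).2 + (t == t0)%:R *: shV m i)]]].
  have phiI : injective phi.
    move=> s1 s2 E; apply/ffunP => m; apply/ffunP => i; apply/ffunP => t.
    move: E => /ffunP /(_ m) /ffunP /(_ i) /ffunP /(_ t); rewrite /phi !ffunE.
    by case: (s1 m i t) => a b; case: (s2 m i t) => a' b' [/addIr -> /addIr ->].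
  have key : forall sg, f dl sg = f dl0 (phi sg).
    move=> sg; rewrite /f; apply: eq_bigr => m _; apply: eq_bigr => i _.
    have E1 : coded_data beta (dl m i).1 (fun t => (sg m i t).1) (alpha n) =
              coded_data beta (dl0 m i).1 (fun t => ((phi sg) m i t).1) (alpha n).
      apply: (cd_shift2 _ _ _ _ _ _ _ _ _ _ t0 _ (shZ m i) Lb0) => [//|t].
      by rewrite /phi !ffunE.
    have E2 : coded_model beta (dl m i).2 (fun t => (sg m i t).2) (alpha n) =
              coded_model beta (dl0 m i).2 (fun t => ((phi sg) m i t).2) (alpha n).
      apply: (cm_shift2 _ _ _ _ _ _ _ _ _ _ t0 _ (shV m i) Lb0) => [//|t].
      by rewrite /phi !ffunE.
    by rewrite E1 E2.
  rewrite -[RHS](card_preimset _ phiI); apply: eq_card => sg.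
  rewrite !inE; exact: (congr1 (fun v => v == y) (key sg)).
Qed.
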